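(* Let $\Gamma\subset\mathbb S^2$ be half of a great circle joining the north pole $e_3$ and the south pole $-e_3$, and for $r>0$ let $S=\overline{\bigcup_{x\in\Gamma}B(x,r)}$ (metric balls of the round metric). There is $r_0>0$ such that for every $r\in(0,r_0)$, the round sphere $\mathbb S^2$ with measurement set $S$ is $\mathrm{FLIE}_\varepsilon$ for $\varepsilon=r$, but it is not $\mathrm{FLIE}_\varepsilon$ for every $\varepsilon>0$.
   Context: $\mathbb S^2$ carries the round distance. For compact length space $(X,d)$ and closed $S\subset X$, $\mathcal R_{X,S}(p)(z)=d(p,z)$, $z\in S$; $(X,d)$ with $S$ is $\mathrm{FLIE}_\varepsilon$ if $\mathcal R_{X,S}\colon(X,d)\to(C(S),\|\cdot\|_\infty)$ is a topological embedding and $\|\mathcal R_{X,S}(p)-\mathcal R_{X,S}(q)\|_\infty=d(p,q)$ whenever $d(p,q)<\varepsilon$. *)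

(* Defs.v *)
From Stdlib Require Import Reals.
From Coquelicot Require Import Coquelicot.
Open Scope R_scope.

Definition pt : Type := (R * R * R)%type.

Definition dot (p q : pt) : R :=
  let '(a, b, c) := p in let '(x, y, z) := q in a * x + b * y + c * z.

Definition vadd (p q : pt) : pt :=
  let '(a, b, c) := p in let '(x, y, z) := q in (a + x, b + y, c + z).

Definition vscale (t : R) (p : pt) : pt :=
  let '(a, b, c) := p in (t * a, t * b, t * c).

Definition on_sphere (p : pt) : Prop := dot p p = 1.
Definition sdist (p q : pt) : R := acos (dot p q).

Definition e3 : pt := (0, 0, 1).

Definition half_gc (u : pt) (x : pt) : Prop :=
  exists t, 0 <= t <= PI /\ x = vadd (vscale (cos t) e3) (vscale (sin t) u).

(* S = closure (in S^2) of the union of the open metric balls B(x,r), x in Gamma. *)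
Definition meas_set (u : pt) (r : R) (p : pt) : Prop :=
  on_sphere p /\
  forall delta, 0 < delta ->
    exists q, on_sphere q /\ sdist p q < delta /\
      exists x, half_gc u x /\ sdist q x < r.

(* || R_{X,S}(p) - R_{X,S}(q) ||_infty = sup_{z in S} |d(p,z) - d(q,z)| *)
Definition supdist (S : pt -> Prop) (p q : pt) : R :=
  real (Lub_Rbar (fun v => exists z, S z /\ v = Rabs (sdist p z - sdist q z))).

(* FLIE_eps for (S^2, round distance) with measurement set S:
   R_{X,S} is a topological embedding into (C(S), sup norm)
   (injective, continuous, with continuous inverse on its image), and it is
   isometric on pairs at distance < eps. *)
Definition FLIE (S : pt -> Prop) (eps : R) : Prop :=
  (forall p q, on_sphere p -> on_sphere q ->
     (forall z, S z -> sdist p z = sdist q z) -> p = q) /\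
  (forall p, on_sphere p -> forall eta, 0 < eta -> exists delta, 0 < delta /\
     forall q, on_sphere q -> sdist p q < delta -> supdist S p q < eta) /\
  (forall p, on_sphere p -> forall eta, 0 < eta -> exists delta, 0 < delta /\
     forall q, on_sphere q -> supdist S p q < delta -> sdist p q < eta) /\
  (forall p q, on_sphere p -> on_sphere q -> sdist p q < eps ->
     supdist S p q = sdist p q).

(* Main.v *)
Require Import Defs.
From Stdlib Require Import Reals.
From Coquelicot Require Import Coquelicot.
From Stdlib Require Import Lra Psatz.
Open Scope R_scope.

Lemma dot_comm p q : dot p q = dot q p.
Proof. destruct p as [[p1 p2] p3], q as [[q1 q2] q3]; simpl; ring. Qed.

Lemma sdist_comm p q : sdist p q = sdist q p.
Proof. unfold sdist; now rewrite dot_comm. Qed.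

Lemma dot_bound p q : on_sphere p -> on_sphere q -> -1 <= dot p q <= 1.
Proof.
  destruct p as [[p1 p2] p3], q as [[q1 q2] q3]; unfold on_sphere; simpl; intros Hp Hq.
  assert (H : (p1*q1+p2*q2+p3*q3)^2 <= 1).
  { assert (E: (p1*p1+p2*p2+p3*p3)*(q1*q1+q2*q2+q3*q3) - (p1*q1+p2*q2+p3*q3)^2
      = (p1*q2-p2*q1)^2 + (p1*q3-p3*q1)^2 + (p2*q3-p3*q2)^2) by ring.
    rewrite Hp, Hq in E.
    assert (0 <= (p1*q2-p2*q1)^2 + (p1*q3-p3*q1)^2 + (p2*q3-p3*q2)^2) by
      (pose proof (pow2_ge_0 (p1*q2-p2*q1)); pose proof (pow2_ge_0 (p1*q3-p3*q1));
       pose proof (pow2_ge_0 (p2*q3-p3*q2)); lra).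
    lra. }
  nra.
Qed.

Lemma dot_self p : on_sphere p -> dot p p = 1.
Proof. auto. Qed.

Lemma acos_le_inv x y : -1 <= x <= 1 -> -1 <= y <= 1 -> x <= y -> acos y <= acos x.
Proof.
  intros Hx Hy Hxy.
  destruct (Rle_or_lt (acos y) (acos x)) as [H|H]; auto.
  pose proof (acos_bound x); pose proof (acos_bound y).
  pose proof (cos_decreasing_1 (acos x) (acos y)) as C.
  rewrite !cos_acos in C by lra. lra.
Qed.

Lemma acos_lt_inv x y : -1 <= x <= 1 -> -1 <= y <= 1 -> x < y -> acos y < acos x.
Proof.
  intros Hx Hy Hxy.
  destruct (Rle_or_lt (acos x) (acos y)) as [H|H]; auto.
  destruct H as [H|H].
  - pose proof (acos_bound x); pose proof (acos_bound y).
    pose proof (cos_decreasing_1 (acos x) (acos y)) as C.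
    rewrite !cos_acos in C by lra. lra.
  - apply (f_equal cos) in H. rewrite !cos_acos in H by lra. lra.
Qed.

Lemma acos_inj x y : -1 <= x <= 1 -> -1 <= y <= 1 -> acos x = acos y -> x = y.
Proof. intros Hx Hy H. apply (f_equal cos) in H. rewrite !cos_acos in H by lra. auto. Qed.

Lemma gram p q z : on_sphere p -> on_sphere q -> on_sphere z ->
  (dot p z - dot p q * dot q z)^2 <= (1 - (dot p q)^2) * (1 - (dot q z)^2).
Proof.
  destruct p as [[p1 p2] p3], q as [[q1 q2] q3], z as [[z1 z2] z3];
  unfold on_sphere; simpl; intros Hp Hq Hz.
  set (a := q1*z1+q2*z2+q3*z3).
  set (b := p1*q1+p2*q2+p3*q3).
  set (c := p1*z1+p2*z2+p3*z3).
  assert (E: (p1*p1+p2*p2+p3*p3)*(q1*q1+q2*q2+q3*q3)*(z1*z1+z2*z2+z3*z3)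
     + 2*a*b*c - (p1*p1+p2*p2+p3*p3)*a^2 - (q1*q1+q2*q2+q3*q3)*c^2
     - (z1*z1+z2*z2+z3*z3)*b^2 =
     (p1*(q2*z3-q3*z2) - p2*(q1*z3-q3*z1) + p3*(q1*z2-q2*z1))^2)
    by (unfold a, b, c; ring).
  rewrite Hp, Hq, Hz in E.
  pose proof (pow2_ge_0 (p1*(q2*z3-q3*z2) - p2*(q1*z3-q3*z1) + p3*(q1*z2-q2*z1))).
  replace ((c - b * a) ^ 2) with (c^2 - 2*a*b*c + a^2*b^2) by ring.
  replace ((1 - b^2) * (1 - a^2)) with (1 - a^2 - b^2 + a^2*b^2) by ring.
  lra.
Qed.

Lemma triangle p q z : on_sphere p -> on_sphere q -> on_sphere z ->
  sdist p z <= sdist p q + sdist q z.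
Proof.
  intros Hp Hq Hz. unfold sdist.
  pose proof (dot_bound _ _ Hp Hq) as Ha.
  pose proof (dot_bound _ _ Hq Hz) as Hb.
  pose proof (dot_bound _ _ Hp Hz) as Hc.
  pose proof (gram _ _ _ Hp Hq Hz) as G.
  set (a := dot p q) in *; set (b := dot q z) in *; set (c := dot p z) in *.
  pose proof (acos_bound a); pose proof (acos_bound b); pose proof (acos_bound c).
  destruct (Rle_or_lt PI (acos a + acos b)) as [Hpi|Hpi]; [lra|].
  assert (Hcos : cos (acos a + acos b) = a*b - sqrt (1 - a²) * sqrt (1 - b²)).
  { rewrite cos_plus, !cos_acos, !sin_acos by lra. ring. }
  assert (Hs1 : 0 <= 1 - a²) by (unfold Rsqr; nra).
  assert (Hs2 : 0 <= 1 - b²) by (unfold Rsqr; nra).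
  pose proof (sqrt_pos (1 - a²)); pose proof (sqrt_pos (1 - b²)).
  pose proof (Rsqr_sqrt _ Hs1) as Q1; pose proof (Rsqr_sqrt _ Hs2) as Q2.
  set (sa := sqrt (1 - a²)) in *; set (sb := sqrt (1 - b²)) in *.
  unfold Rsqr in *.
  assert (Hge : a*b - sa*sb <= c).
  { destruct (Rle_or_lt (a*b - sa*sb) c) as [h|h]; auto.
    assert (0 <= sa*sb) by nra.
    assert ((c - a*b)^2 > (sa*sb)^2) by nra.
    assert ((sa*sb)^2 = (1 - a*a)*(1-b*b)) by (rewrite <- Q1, <- Q2; ring).
    nra. }
  rewrite <- Hcos in Hge.
  assert (Hcb : -1 <= cos (acos a + acos b) <= 1) by apply COS_bound.
  pose proof (acos_le_inv _ _ Hcb Hc Hge) as K.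
  rewrite acos_cos in K by lra. lra.
Qed.

Lemma absdiff p q z : on_sphere p -> on_sphere q -> on_sphere z ->
  Rabs (sdist p z - sdist q z) <= sdist p q.
Proof.
  intros Hp Hq Hz.
  pose proof (triangle p q z Hp Hq Hz).
  pose proof (triangle q p z Hq Hp Hz).
  rewrite (sdist_comm q p) in H0.
  apply Rabs_le; lra.
Qed.

Lemma sdist_nonneg p q : 0 <= sdist p q.
Proof. apply acos_bound. Qed.

Lemma lub_le (E : R -> Prop) M : 0 <= M -> (forall v, E v -> v <= M) ->
  real (Lub_Rbar E) <= M.
Proof.
  intros HM HE. destruct (Lub_Rbar_correct E) as [_ H].
  assert (Hub : is_ub_Rbar E M) by (intros x Hx; simpl; auto).
  specialize (H _ Hub).
  destruct (Lub_Rbar E); simpl in *; auto; contradiction.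
Qed.

Lemma lub_ge (E : R -> Prop) M v : (forall w, E w -> w <= M) -> E v ->
  v <= real (Lub_Rbar E).
Proof.
  intros HE Hv. destruct (Lub_Rbar_correct E) as [H1 H].
  assert (Hub : is_ub_Rbar E M) by (intros x Hx; simpl; auto).
  specialize (H _ Hub). specialize (H1 _ Hv).
  destruct (Lub_Rbar E); simpl in *; auto; contradiction.
Qed.

Lemma supdist_le (S : pt -> Prop) p q : (forall z, S z -> on_sphere z) ->
  on_sphere p -> on_sphere q -> supdist S p q <= sdist p q.
Proof.
  intros HS Hp Hq. unfold supdist. apply lub_le. apply sdist_nonneg.
  intros v [z [Hz ->]]. apply absdiff; auto.
Qed.

Lemma supdist_ge (S : pt -> Prop) p q z : (forall z, S z -> on_sphere z) ->
  on_sphere p -> on_sphere q -> S z ->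
  Rabs (sdist p z - sdist q z) <= supdist S p q.
Proof.
  intros HS Hp Hq Hz. unfold supdist. apply (lub_ge _ (sdist p q)).
  - intros v [z' [Hz' ->]]. apply absdiff; auto.
  - exists z; auto.
Qed.

Lemma Rabs_sin_le_pos x : 0 <= x -> Rabs (sin x) <= Rabs x.
Proof.
  intros H. rewrite (Rabs_right x) by lra.
  destruct (Req_dec x 0) as [->|Hn]. rewrite sin_0, Rabs_R0; lra.
  pose proof (sin_lt_x x ltac:(lra)). pose proof (SIN_bound x).
  apply Rabs_le. split; [|lra].
  destruct (Rle_or_lt 1 x); [lra|].
  pose proof PI2_1. pose proof (sin_gt_0 x ltac:(lra) ltac:(lra)). lra.
Qed.

Lemma Rabs_sin_le x : Rabs (sin x) <= Rabs x.
Proof.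
  destruct (Rle_or_lt 0 x). now apply Rabs_sin_le_pos.
  rewrite <- (Rabs_Ropp x), <- (Rabs_Ropp (sin x)), <- sin_neg.
  apply Rabs_sin_le_pos; lra.
Qed.

Lemma cos_lip x y : Rabs (cos x - cos y) <= Rabs (x - y).
Proof.
  rewrite form2.
  rewrite !Rabs_mult.
  pose proof (Rabs_sin_le ((x - y)/2)).
  pose proof (SIN_bound ((x + y)/2)).
  assert (Rabs (sin ((x+y)/2)) <= 1) by (apply Rabs_le; lra).
  replace (Rabs (-2)) with 2 by (rewrite Rabs_left; lra).
  replace (Rabs ((x - y)/2)) with (Rabs (x-y) / 2) in H.
  2:{ unfold Rdiv. rewrite Rabs_mult. rewrite (Rabs_right (/2)); lra. }
  pose proof (Rabs_pos (sin ((x - y)/2))).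
  pose proof (Rabs_pos (sin ((x + y)/2))).
  nra.
Qed.

Section S.
Variables u1 u2 : R.
Hypothesis Hu : u1*u1 + u2*u2 = 1.
Let u : pt := (u1, u2, 0).

Lemma half_gc_sphere x : half_gc u x -> on_sphere x.
Proof.
  intros [t [_ ->]]. unfold on_sphere, u, e3; simpl.
  pose proof (sin2_cos2 t). unfold Rsqr in H. nra.
Qed.

Lemma meas_sphere r z : meas_set u r z -> on_sphere z.
Proof. intros [H _]; auto. Qed.

Lemma sdist_self p : on_sphere p -> sdist p p = 0.
Proof. intros H; unfold sdist; rewrite H; apply acos_1. Qed.

Lemma in_meas r q x : on_sphere q -> half_gc u x -> sdist q x < r -> meas_set u r q.
Proof.
  intros Hq Hx Hd. split; auto. intros d Hdel. exists q. split; auto.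
  rewrite sdist_self by auto. split; auto. exists x; auto.
Qed.

Lemma e3_gc : half_gc u e3.
Proof.
  exists 0. split. pose proof PI_RGT_0; lra.
  rewrite cos_0, sin_0. unfold u, e3; simpl. f_equal; [f_equal|]; ring.
Qed.

Lemma u_gc : half_gc u u.
Proof.
  exists (PI/2). split. pose proof PI_RGT_0; lra.
  rewrite cos_PI2, sin_PI2. unfold u, e3; simpl. f_equal; [f_equal|]; ring.
Qed.

Definition mpt (s : R) : pt := (sin s * - u2, sin s * u1, cos s).

Lemma mpt_sphere s : on_sphere (mpt s).
Proof. unfold on_sphere, mpt; simpl. pose proof (sin2_cos2 s). unfold Rsqr in H. nra. Qed.

Lemma e3_sphere : on_sphere e3.
Proof. unfold on_sphere, e3; simpl; ring. Qed.

Lemma u_sphere : on_sphere u.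
Proof. unfold on_sphere, u; simpl. lra. Qed.

Lemma meas_e3 r : 0 < r -> meas_set u r e3.
Proof. intros. apply (in_meas r e3 e3 e3_sphere e3_gc). rewrite sdist_self; auto. apply e3_sphere. Qed.

Lemma meas_u r : 0 < r -> meas_set u r u.
Proof. intros. apply (in_meas r u u u_sphere u_gc). rewrite sdist_self; auto. apply u_sphere. Qed.

Lemma meas_m r : 0 < r -> r < PI -> meas_set u r (mpt (r/2)).
Proof.
  intros. apply (in_meas r _ e3 (mpt_sphere _) e3_gc).
  unfold sdist, mpt, e3; simpl.
  replace (sin (r / 2) * - u2 * 0 + sin (r / 2) * u1 * 0 + cos (r / 2) * 1) with (cos (r/2)) by ring.
  rewrite acos_cos; lra.
Qed.

Lemma dot_eq_of_sdist p q z : on_sphere p -> on_sphere q -> on_sphere z ->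
  sdist p z = sdist q z -> dot p z = dot q z.
Proof.
  intros. apply acos_inj; auto using dot_bound.
Qed.

Lemma dot_close_of_sdist p q z d : on_sphere p -> on_sphere q -> on_sphere z ->
  Rabs (sdist p z - sdist q z) < d -> Rabs (dot p z - dot q z) < d.
Proof.
  intros Hp Hq Hz H. unfold sdist in H.
  rewrite <- (cos_acos (dot p z)), <- (cos_acos (dot q z)) by (apply dot_bound; auto).
  eapply Rle_lt_trans. apply cos_lip. auto.
Qed.

Lemma flie_inj r : 0 < r -> r < PI -> forall p q, on_sphere p -> on_sphere q ->
  (forall z, meas_set u r z -> sdist p z = sdist q z) -> p = q.
Proof.
  intros Hr Hr' p q Hp Hq H.
  pose proof (dot_eq_of_sdist p q _ Hp Hq e3_sphere (H _ (meas_e3 r Hr))) as E1.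
  pose proof (dot_eq_of_sdist p q _ Hp Hq u_sphere (H _ (meas_u r Hr))) as E2.
  pose proof (dot_eq_of_sdist p q _ Hp Hq (mpt_sphere _) (H _ (meas_m r Hr Hr'))) as E3.
  assert (Hs : 0 < sin (r/2)) by (apply sin_gt_0; lra).
  revert E1 E2 E3. unfold u, e3, mpt.
  destruct p as [[p1 p2] p3], q as [[q1 q2] q3]; simpl. intros E1 E2 E3.
  assert (e3 : p3 = q3) by lra.
  subst q3.
  assert (w : sin (r/2) * (-u2*(p1-q1) + u1*(p2-q2)) = 0) by lra.
  assert (w2 : -u2*(p1-q1) + u1*(p2-q2) = 0).
  { destruct (Rmult_integral _ _ w); lra. }
  assert (w1 : u1*(p1-q1) + u2*(p2-q2) = 0) by lra.
  assert (p1 - q1 = u1 * (u1*(p1-q1) + u2*(p2-q2)) - u2*(-u2*(p1-q1) + u1*(p2-q2)))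
    by (transitivity ((u1*u1+u2*u2)*(p1-q1)); [rewrite Hu; ring | ring]).
  assert (p2 - q2 = u2 * (u1*(p1-q1) + u2*(p2-q2)) + u1*(-u2*(p1-q1) + u1*(p2-q2)))
    by (transitivity ((u1*u1+u2*u2)*(p2-q2)); [rewrite Hu; ring | ring]).
  rewrite w1, w2 in *.
  repeat f_equal; lra.
Qed.

Lemma flie_invcont r : 0 < r -> r < PI -> forall p, on_sphere p -> forall eta, 0 < eta ->
  exists delta, 0 < delta /\ forall q, on_sphere q ->
   supdist (meas_set u r) p q < delta -> sdist p q < eta.
Proof.
  intros Hr Hr' p Hp eta Heta.
  destruct (Rlt_or_le PI eta) as [Hbig|Hsm].
  { exists 1. split; [lra|]. intros. pose proof (acos_bound (dot p q)). unfold sdist; lra. }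
  set (c := 1 - cos eta).
  assert (Hc : 0 < c).
  { unfold c. pose proof (cos_decreasing_1 0 eta). rewrite cos_0 in H. pose proof PI_RGT_0.
    assert (cos eta < 1) by (apply H; lra). lra. }
  assert (Hc2 : c <= 2) by (unfold c; pose proof (COS_bound eta); lra).
  set (sg := sin (r/2)).
  assert (Hs : 0 < sg) by (apply sin_gt_0; lra).
  assert (Hs1 : sg <= 1) by (pose proof (SIN_bound (r/2)); unfold sg; lra).
  exists (sg*sg*c/16). split. { assert (0 < sg*sg) by nra. unfold Rdiv. apply Rmult_lt_0_compat; [|lra]. nra. }
  intros q Hq Hsup.
  set (del := sg*sg*c/16) in *.
  assert (HS : forall z, meas_set u r z -> on_sphere z) by apply meas_sphere.
  pose proof (fun z Hz => Rle_lt_trans _ _ _ (supdist_ge _ p q z HS Hp Hq Hz) Hsup) as K.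
  pose proof (dot_close_of_sdist _ _ _ _ Hp Hq e3_sphere (K _ (meas_e3 r Hr))) as E1.
  pose proof (dot_close_of_sdist _ _ _ _ Hp Hq u_sphere (K _ (meas_u r Hr))) as E2.
  pose proof (dot_close_of_sdist _ _ _ _ Hp Hq (mpt_sphere _) (K _ (meas_m r Hr Hr'))) as E3.
  assert (Hpq : cos eta < dot p q).
  { revert E1 E2 E3 Hp Hq. unfold u, e3, mpt, on_sphere.
    fold sg.
    destruct p as [[p1 p2] p3], q as [[q1 q2] q3]; simpl. intros E1 E2 E3 Hp Hq.
    set (d1 := p1 - q1); set (d2 := p2 - q2); set (d3 := p3 - q3).
    set (w := -u2*d1 + u1*d2).
    set (A := u1*d1 + u2*d2).
    assert (N : d1*d1+d2*d2+d3*d3 = 2 - 2*(p1*q1+p2*q2+p3*q3)) by (unfold d1,d2,d3; transitivity ((p1*p1+p2*p2+p3*p3) + (q1*q1+q2*q2+q3*q3) - 2*(p1*q1+p2*q2+p3*q3)); [ring| rewrite Hp, Hq; ring]).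
    assert (N2 : d1*d1+d2*d2 = A*A + w*w) by (unfold A, w; transitivity ((u1*u1+u2*u2)*(d1*d1+d2*d2)); [rewrite Hu; ring | ring]).
    assert (H1 : Rabs d3 < del) by (unfold d3; replace (p3-q3) with (p1*0+p2*0+p3*1 - (q1*0+q2*0+q3*1)) by ring; auto).
    assert (H2 : Rabs A < del) by (unfold A, d1, d2; replace (u1 * (p1 - q1) + u2 * (p2 - q2)) with (p1 * u1 + p2 * u2 + p3 * 0 - (q1 * u1 + q2 * u2 + q3 * 0)) by ring; auto).
    assert (H3 : Rabs (cos (r/2) * d3 + sg * w) < del) by
      (unfold w, d1, d2, d3; replace (cos (r / 2) * (p3 - q3) + sg * (- u2 * (p1 - q1) + u1 * (p2 - q2))) with (p1 * (sg * - u2) + p2 * (sg * u1) + p3 * cos (r / 2) - (q1 * (sg * - u2) + q2 * (sg * u1) + q3 * cos (r / 2))) by ring; auto).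
    assert (Hcs : Rabs (cos (r/2)) <= 1) by (apply Rabs_le; apply COS_bound).
    assert (H4 : Rabs (sg * w) < 2*del).
    { replace (sg*w) with ((cos (r/2) * d3 + sg * w) - cos (r/2) * d3) by ring.
      eapply Rle_lt_trans. apply Rabs_triang. rewrite Rabs_Ropp, Rabs_mult.
      pose proof (Rabs_pos d3). nra. }
    assert (Hdel : 0 < del) by (unfold del; assert (0 < sg*sg) by nra; unfold Rdiv; apply Rmult_lt_0_compat; [|lra]; nra).
    apply Rabs_def2 in H1. apply Rabs_def2 in H2. apply Rabs_def2 in H4.
    assert (Q1 : d3*d3 < del*del) by nra.
    assert (Q2 : A*A < del*del) by nra.
    assert (Q3 : (sg*w)*(sg*w) < 4*del*del) by nra.
    assert (Q4 : sg*sg*(d1*d1+d2*d2+d3*d3) < 2*c*(sg*sg)).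
    { rewrite N2.
      assert (sg*sg*(A*A) <= A*A) by (assert (0 <= A*A) by nra; assert (sg*sg <= 1) by nra; nra).
      assert (sg*sg*(d3*d3) <= d3*d3) by (assert (0 <= d3*d3) by nra; assert (sg*sg <= 1) by nra; nra).
      assert (sg*sg*(A*A+w*w+d3*d3) = sg*sg*(A*A) + (sg*w)*(sg*w) + sg*sg*(d3*d3)) by ring.
      assert (sg*sg*(A*A+w*w+d3*d3) < 6*del*del) by lra.
      assert (6*del*del <= 2*c*(sg*sg)).
      { unfold del. assert (0 <= sg*sg <= 1) by nra.
        set (t := sg*sg) in *.
        replace (6 * (t * c / 16) * (t * c / 16)) with ((2*c*t) * (3*t*c/256)) by field.
        assert (0 <= 2*c*t) by nra. assert (3*t*c/256 <= 1) by nra. nra. }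
      lra. }
    assert (d1*d1+d2*d2+d3*d3 < 2*c).
    { assert (0 < sg*sg) by nra.
      apply (Rmult_lt_reg_l (sg*sg)); lra. }
    unfold c in *. lra. }
  unfold sdist. rewrite <- (acos_cos eta) by lra.
  apply acos_lt_inv; auto using dot_bound, COS_bound.
Qed.
End S.

Lemma dot_vadd_r p q z : dot p (vadd q z) = dot p q + dot p z.
Proof. destruct p as [[? ?] ?], q as [[? ?] ?], z as [[? ?] ?]; simpl; ring. Qed.
Lemma dot_vscale_r p t q : dot p (vscale t q) = t * dot p q.
Proof. destruct p as [[? ?] ?], q as [[? ?] ?]; simpl; ring. Qed.
Lemma dot_vadd_l p q z : dot (vadd q z) p = dot q p + dot z p.
Proof. destruct p as [[? ?] ?], q as [[? ?] ?], z as [[? ?] ?]; simpl; ring. Qed.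
Lemma dot_vscale_l p t q : dot (vscale t q) p = t * dot q p.
Proof. destruct p as [[? ?] ?], q as [[? ?] ?]; simpl; ring. Qed.

Ltac dsimp := repeat (rewrite ?dot_vadd_r, ?dot_vscale_r, ?dot_vadd_l, ?dot_vscale_l).

Lemma angle_of x y : x*x + y*y = 1 -> exists th, -PI <= th <= PI /\ x = cos th /\ y = sin th.
Proof.
  intros H.
  assert (Hx : -1 <= x <= 1) by nra.
  assert (Hs : sqrt (1 - x²) = Rabs y).
  { replace (1 - x²) with (Rsqr (Rabs y)). apply sqrt_Rsqr, Rabs_pos.
    rewrite <- Rsqr_abs. unfold Rsqr. lra. }
  pose proof (acos_bound x).
  destruct (Rle_or_lt 0 y) as [Hy|Hy].
  - exists (acos x). split. pose proof PI_RGT_0; lra.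
    rewrite cos_acos, sin_acos, Hs, Rabs_right by lra. auto.
  - exists (- acos x). split. lra.
    rewrite cos_neg, sin_neg, cos_acos, sin_acos, Hs, Rabs_left by lra. split; auto; lra.
Qed.

Section S4.
Variables u1 u2 : R.
Hypothesis Hu : u1*u1 + u2*u2 = 1.
Let u : pt := (u1, u2, 0).
Let n : pt := (-u2, u1, 0).

Lemma gc_of Y : on_sphere Y -> dot n Y = 0 -> 0 <= dot u Y -> half_gc u Y.
Proof.
  unfold on_sphere, n, u. destruct Y as [[y1 y2] y3]; simpl. intros HY Hn Hk.
  set (k := u1*y1 + u2*y2 + 0*y3) in *.
  assert (E1 : y1 = k * u1).
  { unfold k. transitivity (y1*(u1*u1+u2*u2)). rewrite Hu; ring.
    transitivity ((u1*y1 + u2*y2 + 0*y3)*u1 - u2*(-u2*y1 + u1*y2 + 0*y3)). ring.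
    rewrite Hn; ring. }
  assert (E2 : y2 = k * u2).
  { unfold k. transitivity (y2*(u1*u1+u2*u2)). rewrite Hu; ring.
    transitivity ((u1*y1 + u2*y2 + 0*y3)*u2 + u1*(-u2*y1 + u1*y2 + 0*y3)). ring.
    rewrite Hn; ring. }
  assert (Hk2 : k*k = 1 - y3*y3).
  { transitivity ((k*u1)*(k*u1)+(k*u2)*(k*u2)).
    transitivity (k*k*(u1*u1+u2*u2)). rewrite Hu; ring. ring.
    rewrite <- E1, <- E2. lra. }
  assert (Hy3 : -1 <= y3 <= 1) by nra.
  exists (acos y3). split. apply acos_bound.
  assert (Hsin : sin (acos y3) = k).
  { rewrite sin_acos by lra. unfold Rsqr. rewrite <- Hk2.
    change (k*k) with (Rsqr k). apply sqrt_Rsqr. auto. }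
  unfold e3; simpl. rewrite Hsin, cos_acos by lra.
  rewrite E1, E2 at 1. f_equal. f_equal. all: ring.
Qed.

Lemma acos_m1 : acos (-1) = PI.
Proof. replace (-1) with (- (1)) by ring. rewrite acos_opp, acos_1. ring. Qed.

Lemma iso r : 0 < r < 1 -> forall p q, on_sphere p -> on_sphere q -> sdist p q < r ->
  supdist (meas_set u r) p q = sdist p q.
Proof.
  intros [Hr Hr1] p q Hp Hq Hd.
  pose proof PI2_1 as HPI.
  assert (HS : forall z, meas_set u r z -> on_sphere z) by apply meas_sphere.
  apply Rle_antisym. apply supdist_le; auto.
  pose proof (dot_bound _ _ Hp Hq) as Ha.
  unfold sdist at 1. unfold sdist in Hd.
  set (a := dot p q) in *.
  destruct (Req_dec a 1) as [Ha1|Ha1].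
  { rewrite Ha1, acos_1. eapply Rle_trans; [apply Rabs_pos|].
    apply supdist_ge with (z := e3); auto. apply meas_e3; auto. }
  assert (Ham : a <> -1).
  { intro E. rewrite E, acos_m1 in Hd. lra. }
  set (d := acos a) in *.
  pose proof (acos_bound a) as Hdb. fold d in Hdb.
  assert (Has : 0 < 1 - a²) by (unfold Rsqr; destruct Ha as [[h1|h1] [h2|h2]]; try lra; nra).
  set (s := sqrt (1 - a²)).
  assert (Hs : 0 < s) by (apply sqrt_lt_R0; auto).
  assert (Hss : s * s = 1 - a²) by (apply sqrt_sqrt; lra).
  assert (Hcd : cos d = a) by (apply cos_acos; lra).
  assert (Hsd : sin d = s) by (apply sin_acos; lra).
  set (w := vscale (/s) (vadd p (vscale (-a) q))).
  assert (Hqp : dot q p = a) by (unfold a; apply dot_comm).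
  assert (Hpp : dot p p = 1) by auto.
  assert (Hqq : dot q q = 1) by auto.
  assert (Hqw : dot q w = 0).
  { unfold w. dsimp. rewrite Hqp, Hqq. field. lra. }
  assert (Hwq : dot w q = 0) by (rewrite dot_comm; auto).
  assert (Hpw : dot p w = s).
  { unfold w. dsimp. fold a. rewrite Hpp. unfold Rsqr in Hss.
    replace (1 + -a*a) with (s*s) by lra. field. lra. }
  assert (Hwp : dot w p = s) by (rewrite dot_comm; auto).
  assert (Hww : dot w w = 1).
  { unfold w at 2. dsimp. rewrite Hwp, Hwq. field. lra. }
  set (C := fun x y => vadd (vscale x q) (vscale y w)).
  assert (HCq : forall x y, dot q (C x y) = x).
  { intros; unfold C; dsimp. rewrite Hqq, Hqw; ring. }
  assert (HCp : forall x y, dot p (C x y) = x * a + y * s).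
  { intros; unfold C; dsimp. rewrite Hpw. fold a. ring. }
  assert (HCs : forall x y, x*x+y*y = 1 -> on_sphere (C x y)).
  { intros x y Hxy; unfold on_sphere, C; dsimp. rewrite Hqq, Hqw, Hwq, Hww. lra. }
  set (al := dot n q). set (be := dot n w).
  assert (HCn : forall x y, dot n (C x y) = x * al + y * be).
  { intros; unfold C; dsimp. fold al be. ring. }
  assert (HCneg : forall x y, C (-x) (-y) = vscale (-1) (C x y)).
  { intros; unfold C. destruct q as [[? ?] ?]; destruct w as [[? ?] ?]; simpl.
    f_equal. f_equal. all: ring. }
  assert (Hex : exists x y, x*x+y*y = 1 /\ dot n (C x y) = 0 /\ 0 <= dot u (C x y)).
  { assert (Hex0 : exists x y, x*x+y*y = 1 /\ x * al + y * be = 0).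
    { destruct (Req_dec (al*al+be*be) 0) as [E|E].
      - exists 1, 0. split. ring. assert (al = 0) by nra. assert (be = 0) by nra. subst; nra.
      - assert (0 < al*al+be*be) by nra.
        set (rh := sqrt (al*al+be*be)).
        assert (0 < rh) by (apply sqrt_lt_R0; auto).
        assert (rh*rh = al*al+be*be) by (apply sqrt_sqrt; lra).
        exists (be/rh), (-al/rh). split. field_simplify. 2: lra.
        replace (rh^2) with (rh*rh) by ring. rewrite H1. field. lra. field. lra. }
    destruct Hex0 as [x [y [H1 H2]]].
    destruct (Rle_or_lt 0 (dot u (C x y))) as [H3|H3].
    - exists x, y. rewrite HCn. auto.
    - exists (-x), (-y). rewrite HCn. split. lra. split. lra.
      rewrite HCneg, dot_vscale_r. lra. }
  destruct Hex as [x [y [Hxy [Hn Hun]]]].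
  set (Y := C x y) in *.
  assert (HYs : on_sphere Y) by (apply HCs; auto).
  assert (HYg : half_gc u Y) by (apply gc_of; auto).
  destruct (angle_of x y Hxy) as [th [Hth [Hx Hy]]].
  assert (HqY : dot q Y = cos th) by (unfold Y; rewrite HCq; auto).
  assert (HpY : dot p Y = cos (th - d)) by (unfold Y; rewrite HCp, cos_minus, Hcd, Hsd, Hx, Hy; ring).
  assert (HYS : meas_set u r Y) by (apply (in_meas u1 u2 r Y Y); auto; rewrite sdist_self; auto).
  destruct (Rle_or_lt d th) as [C1|C1].
  { (* beyond p *)
    eapply Rle_trans; [|apply (supdist_ge _ p q Y HS Hp Hq HYS)].
    unfold sdist. rewrite HpY, HqY, !acos_cos by lra.
    rewrite Rabs_left1 by lra. lra. }
  destruct (Rle_or_lt th 0) as [C2|C2].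
  destruct (Rle_or_lt (d - PI) th) as [C3|C3].
  { (* beyond q *)
    eapply Rle_trans; [|apply (supdist_ge _ p q Y HS Hp Hq HYS)].
    unfold sdist. rewrite HpY, HqY.
    rewrite <- (cos_neg th). replace (th - d) with (- (d - th)) by ring.
    rewrite cos_neg, !acos_cos by lra.
    rewrite Rabs_right by lra. lra. }
  { (* near -p *)
    set (pm := vscale (-1) p).
    assert (Hpms : on_sphere pm) by (unfold on_sphere, pm; dsimp; rewrite Hpp; ring).
    assert (HpmS : meas_set u r pm).
    { apply (in_meas u1 u2 r pm Y); auto. unfold sdist, pm. dsimp. rewrite HpY.
      replace (-1 * cos (th - d)) with (cos (th - d + PI)) by (rewrite neg_cos; ring).
      replace (th - d + PI) with (-(d - th - PI)) by ring.
      rewrite cos_neg, acos_cos by lra. lra. }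
    eapply Rle_trans; [|apply (supdist_ge _ p q pm HS Hp Hq HpmS)].
    unfold sdist, pm. dsimp. rewrite Hpp. fold a. rewrite dot_comm. fold a.
    replace (-1 * 1) with (-1) by ring. rewrite acos_m1.
    replace (-1 * a) with (- a) by ring. rewrite acos_opp. fold d.
    rewrite Rabs_right by lra. lra. }
  { (* between q and p : use q *)
    assert (HqS : meas_set u r q).
    { apply (in_meas u1 u2 r q Y); auto. unfold sdist. rewrite HqY, acos_cos by lra. lra. }
    eapply Rle_trans; [|apply (supdist_ge _ p q q HS Hp Hq HqS)].
    rewrite (sdist_self q Hq). unfold sdist. fold a d.
    rewrite Rabs_right by lra. lra. }
Qed.
End S4.

Lemma far u r v : on_sphere v -> (forall x, half_gc u x -> on_sphere x /\ dot v x = 0) ->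
  forall z, meas_set u r z -> PI/2 - r <= sdist v z.
Proof.
  intros Hv Hg z [Hz Hm]. apply Rnot_lt_le. intro H.
  destruct (Hm (PI/2 - r - sdist v z) ltac:(lra)) as [q [Hq [Hzq [x [Hx Hqx]]]]].
  destruct (Hg x Hx) as [Hxs Hvx].
  pose proof (triangle v z q Hv Hz Hq).
  pose proof (triangle v q x Hv Hq Hxs).
  assert (sdist v x = PI/2) by (unfold sdist; rewrite Hvx; apply acos_0). lra.
Qed.

Theorem main_aux u1 u2 : u1*u1 + u2*u2 = 1 ->
    forall r, 0 < r < 1 ->
      FLIE (meas_set (u1,u2,0) r) r /\
      ~ (forall eps, 0 < eps -> FLIE (meas_set (u1,u2,0) r) eps).
Proof.
  intros Hu r [Hr Hr1].
  pose proof PI2_1 as HPI.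
  assert (HS : forall z, meas_set (u1,u2,0) r z -> on_sphere z) by apply meas_sphere.
  split.
  - split; [|split; [|split]].
    + intros p q Hp Hq H. apply (flie_inj u1 u2 Hu r); auto; lra.
    + intros p Hp eta Heta. exists eta. split; auto. intros q Hq H.
      eapply Rle_lt_trans; [apply supdist_le|]; eauto.
    + intros p Hp eta Heta. apply (flie_invcont u1 u2 Hu r); auto; lra.
    + intros p q Hp Hq H. apply (iso u1 u2 Hu r); auto.
  - intros H. destruct (H 5 ltac:(lra)) as [_ [_ [_ H4]]].
    set (n := (-u2, u1, 0) : pt). set (nn := (u2, -u1, 0) : pt).
    assert (Hn : on_sphere n) by (unfold on_sphere, n; simpl; lra).
    assert (Hnn : on_sphere nn) by (unfold on_sphere, nn; simpl; lra).
    assert (Hd : sdist n nn = PI).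
    { unfold sdist, n, nn; simpl. replace (- u2 * u2 + u1 * - u1 + 0 * 0) with (-1) by lra.
      apply acos_m1. }
    assert (Hg : forall v, v = n \/ v = nn -> forall x, half_gc (u1,u2,0) x -> on_sphere x /\ dot v x = 0).
    { intros v Hv x Hx. split. eapply half_gc_sphere; eauto.
      destruct Hx as [t [_ ->]]. destruct Hv as [->| ->]; unfold n, nn, e3; simpl; ring. }
    assert (Hle : supdist (meas_set (u1,u2,0) r) n nn <= 2*r).
    { unfold supdist. apply lub_le. lra.
      intros v [z [Hz ->]].
      pose proof (far _ r n Hn (Hg n (or_introl eq_refl)) z Hz).
      pose proof (far _ r nn Hnn (Hg nn (or_intror eq_refl)) z Hz).
      assert (E : sdist nn z = PI - sdist n z).
      { unfold sdist. rewrite <- acos_opp. f_equal. destruct z as [[? ?] ?]; unfold n, nn; simpl; ring. }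
      rewrite E in *. pose proof (acos_bound (dot n z)).
      apply Rabs_le. lra. }
    rewrite H4, Hd in Hle; auto. lra. rewrite Hd. pose proof PI_4. lra.
Qed.

Theorem mainTheorem15 :
  forall u : pt, on_sphere u -> dot u e3 = 0 ->
  exists r0, 0 < r0 /\
    forall r, 0 < r < r0 ->
      FLIE (meas_set u r) r /\
      ~ (forall eps, 0 < eps -> FLIE (meas_set u r) eps).
Proof.
  intros [[u1 u2] u3] Hu He.
  unfold on_sphere, dot, e3 in Hu, He.
  assert (H3 : u3 = 0) by lra. subst u3.
  exists 1. split. lra.
  apply main_aux. lra.
Qed.
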